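(* Let $X_1,\dots,X_N$ be random variables (jointly distributed arbitrarily) with values in $\{1,\dots,Z\}$, with marginals $p_i(z)=\Pr(X_i=z)$ and pooled distribution $P_z=\frac1N\sum_{i=1}^N p_i(z)$. Then $$\mathrm{PI}\le S(P)-\frac{1}{N^2}\sum_{i=1}^N\sum_{j=1}^N I(X_i:X_j),$$ where $I(X_i:X_j)$ is the mutual information (in bits) between $X_i$ and $X_j$, and $S(P)=-\sum_z P_z\log_2P_z$.
   Context: The positional information is $$\mathrm{PI}=\frac1N\sum_{i=1}^N\sum_{z=1}^Z p_i(z)\log_2\frac{p_i(z)}{P_z},$$ with the convention $0\log 0=0$. Shannon entropies and mutual informations are taken in base $2$. *)

(* Defs.v *)
From mathcomp Require Import all_boot all_order all_algebra.
From mathcomp Require Import reals exp.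
Set Implicit Arguments. Unset Strict Implicit. Unset Printing Implicit Defensive.
Import Order.TTheory GRing.Theory Num.Theory.
Local Open Scope ring_scope.

Section Defs.
Variables (R : realType) (N Z : nat).

(* A joint distribution of (X_1,...,X_N), each X_i valued in 'I_Z
   (representing {1,...,Z}), is a pmf on outcomes x : 'I_N -> 'I_Z. *)
Definition outcome := {ffun 'I_N -> 'I_Z}.

Definition is_pmf (mu : {ffun outcome -> R}) : Prop :=
  (forall x, 0 <= mu x) /\ \sum_x mu x = 1.

Definition log2 (x : R) : R := ln x / ln 2.

Definition xlogxy (a b : R) : R := if a == 0 then 0 else a * log2 (a / b).

Definition marg (mu : {ffun outcome -> R}) (i : 'I_N) (z : 'I_Z) : R :=
  \sum_(x : outcome | x i == z) mu x.

Definition marg2 (mu : {ffun outcome -> R}) (i j : 'I_N) (a b : 'I_Z) : R :=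
  \sum_(x : outcome | (x i == a) && (x j == b)) mu x.

Definition pooled (mu : {ffun outcome -> R}) (z : 'I_Z) : R :=
  N%:R^-1 * \sum_(i < N) marg mu i z.

Definition PI (mu : {ffun outcome -> R}) : R :=
  N%:R^-1 * \sum_(i < N) \sum_(z < Z) xlogxy (marg mu i z) (pooled mu z).

Definition entropyP (mu : {ffun outcome -> R}) : R :=
  - \sum_(z < Z) (if pooled mu z == 0 then 0 else pooled mu z * log2 (pooled mu z)).

Definition mutinfo (mu : {ffun outcome -> R}) (i j : 'I_N) : R :=
  \sum_(a < Z) \sum_(b < Z) xlogxy (marg2 mu i j a b) (marg mu i a * marg mu j b).

End Defs.

(* Main.v *)
Require Import Defs.
From mathcomp Require Import all_boot all_order all_algebra.
From mathcomp Require Import reals exp.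
From mathcomp Require Import ring lra.
Import Order.TTheory GRing.Theory Num.Theory.
Local Open Scope ring_scope.

Section Proofs.
Variables (R : realType) (N Z : nat).
Variable (mu : {ffun outcome N Z -> R}).
Hypothesis mu0 : forall x, 0 <= mu x.

Lemma xlogE (a b : R) : xlogxy a b = a * log2 (a / b).
Proof. by rewrite /xlogxy; case: eqP => [->|]; rewrite ?mul0r. Qed.

Lemma log2_div (a b : R) : 0 < a -> 0 < b -> log2 (a / b) = log2 a - log2 b.
Proof. by move=> a0 b0; rewrite /log2 ln_div ?posrE // mulrBl. Qed.

Lemma log2M (a b : R) : 0 < a -> 0 < b -> log2 (a * b) = log2 a + log2 b.
Proof. by move=> a0 b0; rewrite /log2 lnM ?posrE // mulrDl. Qed.

Lemma ler_log2 {a b : R} : 0 < a -> 0 < b -> a <= b -> log2 a <= log2 b.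
Proof.
move=> a0 b0 ab; rewrite /log2 ler_wpM2r //.
  by rewrite invr_ge0 ltW // ln_gt0 // ltr1n.
by rewrite ler_ln ?posrE.
Qed.

Lemma marg_ge0 i z : 0 <= marg mu i z.
Proof. by apply: sumr_ge0. Qed.

Lemma marg2_ge0 i j a b : 0 <= marg2 mu i j a b.
Proof. by apply: sumr_ge0. Qed.

Lemma marg2_le_l i j a b : marg2 mu i j a b <= marg mu i a.
Proof.
rewrite /marg2 /marg [X in _ <= X]big_mkcond [X in X <= _]big_mkcond.
apply: ler_sum => x _; case: (x i == a); case: (x j == b) => //=.
Qed.

Lemma marg2_le_r i j a b : marg2 mu i j a b <= marg mu j b.
Proof.
rewrite /marg2 /marg [X in _ <= X]big_mkcond [X in X <= _]big_mkcond.
apply: ler_sum => x _; case: (x i == a); case: (x j == b) => //=.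
Qed.

Lemma sum_marg2 i j a : \sum_(b < Z) marg2 mu i j a b = marg mu i a.
Proof. by rewrite /marg (partition_big (fun x : outcome N Z => x j) xpredT). Qed.

Definition H i := - \sum_(a < Z) marg mu i a * log2 (marg mu i a).

Lemma mutinfo_le i j : mutinfo mu i j <= H i.
Proof.
rewrite /mutinfo /H -sumrN; apply: ler_sum => a _.
have -> : marg mu i a * log2 (marg mu i a) =
  \sum_(b < Z) marg2 mu i j a b * log2 (marg mu i a).
  by rewrite -mulr_suml sum_marg2.
rewrite -sumrN; apply: ler_sum => b _.
rewrite xlogE.
have q0 := marg2_ge0 i j a b.
have qp := marg2_le_l i j a b.
have qr := marg2_le_r i j a b.
have [->|qn0] := eqVneq (marg2 mu i j a b) 0; first by rewrite !mul0r oppr0.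
have qpos : 0 < marg2 mu i j a b by rewrite lt0r qn0.
have ppos : 0 < marg mu i a by apply: lt_le_trans qp.
have rpos : 0 < marg mu j b by apply: lt_le_trans qr.
rewrite log2_div ?mulr_gt0 // log2M //.
have := ler_log2 qpos rpos qr.
set q := marg2 _ _ _ _ _; set lq := log2 q; set lp := log2 (marg mu i a); set lr := log2 (marg mu j b).
move=> h.
have h2 : q * (lq - lr) <= 0 by rewrite mulr_ge0_le0 // ?subr_le0 // ltW.
move: h2; rewrite mulrBr mulrBr mulrDr => h2; lra.
Qed.


Hypothesis N0 : (0 < N)%N.

Lemma Nr_neq0 : (N%:R : R) != 0.
Proof. by rewrite pnatr_eq0 -lt0n. Qed.

Lemma Nr_gt0 : (0 : R) < N%:R.
Proof. by rewrite ltr0n. Qed.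

Lemma sum_marg_pooled z : \sum_(i < N) marg mu i z = N%:R * pooled mu z.
Proof. by rewrite /pooled mulrA mulfV ?mul1r // Nr_neq0. Qed.

Lemma marg_le_pooled i z : marg mu i z <= N%:R * pooled mu z.
Proof.
rewrite -sum_marg_pooled (bigD1 i) //= lerDl.
by apply: sumr_ge0 => k _; apply: marg_ge0.
Qed.

Lemma term_eq i z : xlogxy (marg mu i z) (pooled mu z) =
  marg mu i z * log2 (marg mu i z) - marg mu i z * log2 (pooled mu z).
Proof.
rewrite xlogE.
have [->|pn0] := eqVneq (marg mu i z) 0; first by rewrite !mul0r subrr.
have ppos : 0 < marg mu i z by rewrite lt0r pn0 marg_ge0.
have Ppos : 0 < pooled mu z.
  have := lt_le_trans ppos (marg_le_pooled i z).
  by rewrite pmulr_rgt0 // Nr_gt0.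
by rewrite log2_div // mulrBr.
Qed.

Lemma PI_eq : PI mu = entropyP mu - N%:R^-1 * \sum_(i < N) H i.
Proof.
rewrite /PI.
under eq_bigr do under eq_bigr do rewrite term_eq.
under eq_bigr do rewrite sumrB.
rewrite sumrB [X in _ - X]exchange_big /=.
under [X in _ - X]eq_bigr do rewrite -mulr_suml sum_marg_pooled.
rewrite /entropyP.
have -> : \sum_(z < Z) (if pooled mu z == 0 then 0 else pooled mu z * log2 (pooled mu z))
  = \sum_(z < Z) pooled mu z * log2 (pooled mu z).
  by apply: eq_bigr => z _; case: eqP => [->|]; rewrite ?mul0r.
rewrite /H sumrN.
under [X in _ - X]eq_bigr do rewrite -mulrA.
rewrite -mulr_sumr mulrBr mulrA mulVf ?Nr_neq0 // mul1r.
set A := \sum_(i < N) _; set B := \sum_(z < Z) _.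
rewrite mulrN; lra.
Qed.

End Proofs.

Theorem mainTheorem4 (R : realType) (N Z : nat) (mu : {ffun outcome N Z -> R}) :
  (0 < N)%N -> is_pmf mu ->
  PI mu <= entropyP mu - (N%:R ^+ 2)^-1 * \sum_(i < N) \sum_(j < N) mutinfo mu i j.
Proof.
move=> N0 [mu0 _]; rewrite (@PI_eq _ _ _ mu mu0 N0).
have hs : \sum_(i < N) \sum_(j < N) mutinfo mu i j <= N%:R * \sum_(i < N) @H R N Z mu i.
  rewrite mulr_sumr; apply: ler_sum => i _.
  have -> : N%:R * @H R N Z mu i = \sum_(j < N) @H R N Z mu i.
    by rewrite sumr_const card_ord mulr_natl.
  by apply: ler_sum => j _; apply: mutinfo_le.
rewrite lerD2l lerN2.
have e : N%:R^-1 * \sum_(i < N) @H R N Z mu i =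
  (N%:R ^+ 2)^-1 * (N%:R * \sum_(i < N) @H R N Z mu i) :> R.
  by rewrite expr2 invfM -mulrA mulKf // pnatr_eq0 -lt0n.
rewrite e; apply: ler_wpM2l => //.
by rewrite invr_ge0 exprn_ge0 // ler0n.
Qed.
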